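(* Let $\mathscr{A}$ be a quiver over $\Lambda$ and $R$ a set of relations on paths in $\mathscr{A}$, and $\mathscr{C}=\langle\mathscr{A}\mid R\rangle^+$. Assume: (i) every relation in $R$ has the form $a|v\sim b|w$ with $a,b,v,w\in\mathscr{A}$, and every path of length $2$ appears in at most one relation; (ii) for all $a\neq b$ in $\mathscr{A}$ with $\mathfrak{s}(a)=\mathfrak{s}(b)$ there is a unique relation in $R$ of the form $a|v\sim b|w$; (ii') for all $a\neq b$ in $\mathscr{A}$ with $\mathfrak{t}(a)=\mathfrak{t}(b)$ there is a unique relation in $R$ of the form $v|a\sim w|b$; (iii) for every $a\in\mathscr{A}$ there is a unique $z_a\in\mathscr{A}(\mathfrak{t}(a),\Lambda)$ such that: (a) for every $v\in\mathscr{A}(\mathfrak{t}(a),\Lambda)\setminus\{z_a\}$ there are $b\in\mathscr{A}(\mathfrak{s}(a),\Lambda)\setminus\{a\}$ and $w\in\mathscr{A}$ with $(a|v\sim b|w)\in R$; (b) if $(a|z_a\sim b|w)\in R$ then $b=a$ and $w=z_a$; (iii') for every $a\in\mathscr{A}$ there is a unique $z^a\in\mathscr{A}(\Lambda,\mathfrak{s}(a))$ such that: (a) for every $v\in\mathscr{A}(\Lambda,\mathfrak{s}(a))\setminus\{z^a\}$ there are $b\in\mathscr{A}(\Lambda,\mathfrak{t}(a))\setminus\{a\}$ and $w\in\mathscr{A}$ with $(v|a\sim w|b)\in R$; (b) if $(z^a|a\sim w|b)\in R$ then $b=a$ and $w=z^a$; (v) writing, for $a\neq b$ with $\mathfrak{s}(a)=\mathfrak{s}(b)$,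 $a\star b$ for the unique $v$ such that $(a|v\sim b|w)\in R$ for some $w$, one has $(a\star b)\star(a\star c)=(b\star a)\star(b\star c)$ for all pairwise distinct $a,b,c\in\mathscr{A}$ with a common source. Define $a\star' b:=a\star b$ if $a\neq b$ and $a\star' a:=z_a$ (for $\mathfrak{s}(a)=\mathfrak{s}(b)$); then each $a\star'\cdot\colon\mathscr{A}(\mathfrak{s}(a),\Lambda)\to\mathscr{A}(\mathfrak{t}(a),\Lambda)$ is a bijection. Define, for composable $a|b$, $a\rightharpoonup b:=c$ where $c$ is the unique element with $b=a\star' c$, and $a\leftharpoonup b:=(a\rightharpoonup b)\star' a$. Then $\sigma\colon\mathscr{A}\otimes\mathscr{A}\to\mathscr{A}\otimes\mathscr{A}$, $\sigma(a|b)=(a\rightharpoonup b)|(a\leftharpoonup b)$, is an involutive non-degenerate quiver-theoretic Yang--Baxter map on $\mathscr{A}$ whose structure category is $\mathscr{C}$.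
   Context: A quiver over $\Lambda$ has source/target maps $\mathfrak{s},\mathfrak{t}$; $\mathscr{A}(\lambda,\Lambda)$ (resp. $\mathscr{A}(\Lambda,\mu)$) denotes arrows with source $\lambda$ (resp. target $\mu$). $\langle\mathscr{A}\mid R\rangle^+$ is the category presented by generators $\mathscr{A}$ and relations $R$: the path category of $\mathscr{A}$ (paths $x_1|\dots|x_n$ with $\mathfrak{t}(x_i)=\mathfrak{s}(x_{i+1})$, composed by concatenation) modulo the congruence generated by $R$. A relation $u\sim v$ is regarded as the same as $v\sim u$. $\mathscr{A}\otimes\mathscr{A}$ is the quiver of composable pairs $a|b$. A quiver-theoretic Yang--Baxter map is a source/target-preserving map $\sigma$ on $\mathscr{A}\otimes\mathscr{A}$ with $(\sigma\otimes\mathrm{id})(\mathrm{id}\otimes\sigma)(\sigma\otimes\mathrm{id})=(\mathrm{id}\otimes\sigma)(\sigma\otimes\mathrm{id})(\mathrm{id}\otimes\sigma)$; involutive: $\sigma^2=\mathrm{id}$; non-degenerate: all maps $x\rightharpoonup\cdot\colon\mathscr{A}(\mathfrak{t}(x),\Lambda)\to\mathscr{A}(\mathfrak{s}(x),\Lambda)$ and $\cdot\leftharpoonup y\colon\mathscr{A}(\Lambda,\mathfrak{s}(y))\to\mathscr{A}(\Lambda,\mathfrak{t}(y))$ are bijective. Its structure category is the category presented by generators $\mathscr{A}$ and relations $x|y\sim(x\rightharpoonup y)|(x\leftharpoonup y)$. *)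

(* Defs.v *)
From Stdlib Require Import List.
Import ListNotations.

Set Implicit Arguments.

Section Quiver.
Variables (Lam A : Type) (s t : A -> Lam).

(* a path x1|...|xn : composable list of arrows (the empty list stands
   for identity paths; its vertex is irrelevant here) *)
Fixpoint is_path (l : list A) : Prop :=
  match l with
  | x :: ((y :: _) as l') => t x = s y /\ is_path l'
  | _ => True
  end.

Inductive congr (Rel : list A -> list A -> Prop) : list A -> list A -> Prop :=
| congr_step x u v y : Rel u v -> is_path (x ++ u ++ y) -> is_path (x ++ v ++ y) ->
    congr Rel (x ++ u ++ y) (x ++ v ++ y)
| congr_refl p : congr Rel p p
| congr_sym p q : congr Rel p q -> congr Rel q p
| congr_trans p q r : congr Rel p q -> congr Rel q r -> congr Rel p r.

Definition inR (R : list A -> list A -> Prop) (p q : list A) : Prop := R p q \/ R q p.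

Definition isZ (R : list A -> list A -> Prop) (a z : A) : Prop :=
  s z = t a /\
  (forall v, s v = t a -> v <> z ->
     exists b w, s b = s a /\ b <> a /\ inR R [a; v] [b; w]) /\
  (forall b w, inR R [a; z] [b; w] -> b = a /\ w = z).

Definition isZ' (R : list A -> list A -> Prop) (a z : A) : Prop :=
  t z = s a /\
  (forall v, t v = s a -> v <> z ->
     exists b w, t b = t a /\ b <> a /\ inR R [v; a] [w; b]) /\
  (forall b w, inR R [z; a] [w; b] -> b = a /\ w = z).

Definition starR (R : list A -> list A -> Prop) (a b v : A) : Prop :=
  a <> b /\ s a = s b /\ exists w, inR R [a; v] [b; w].

Definition starP (R : list A -> list A -> Prop) (a b v : A) : Prop :=
  (a <> b /\ starR R a b v) \/ (a = b /\ isZ R a v).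

Definition rhR (R : list A -> list A -> Prop) (a b c : A) : Prop :=
  s c = s a /\ starP R a c b.

Definition lhR (R : list A -> list A -> Prop) (a b d : A) : Prop :=
  exists c, rhR R a b c /\ starP R c a d.

Definition s12 (sigma : A -> A -> A * A) (p : A * A * A) : A * A * A :=
  let '(x, y, z) := p in let '(x', y') := sigma x y in (x', y', z).
Definition s23 (sigma : A -> A -> A * A) (p : A * A * A) : A * A * A :=
  let '(x, y, z) := p in let '(y', z') := sigma y z in (x, y', z').

Definition is_QYB (sigma : A -> A -> A * A) : Prop :=
  (forall a b, t a = s b ->
     s (fst (sigma a b)) = s a /\ t (fst (sigma a b)) = s (snd (sigma a b)) /\ t (snd (sigma a b)) = t b) /\
  (forall a b c, t a = s b -> t b = s c ->
     s12 sigma (s23 sigma (s12 sigma (a, b, c))) = s23 sigma (s12 sigma (s23 sigma (a, b, c)))).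

Definition involutive_QYB (sigma : A -> A -> A * A) : Prop :=
  forall a b, t a = s b -> sigma (fst (sigma a b)) (snd (sigma a b)) = (a, b).

Definition nondegenerate_QYB (sigma : A -> A -> A * A) : Prop :=
  (forall x z, s z = s x -> exists! y, s y = t x /\ (fst (sigma x y)) = z) /\
  (forall y z, t z = t y -> exists! x, t x = s y /\ (snd (sigma x y)) = z).

(* defining relations of the structure category: x|y ~ (x -> y)|(x <- y) *)
Definition sigma_rel (sigma : A -> A -> A * A) (p q : list A) : Prop :=
  exists x y, t x = s y /\ p = [x; y] /\ q = [(fst (sigma x y)); (snd (sigma x y))].

End Quiver.

(* Main.v *)
Require Import Defs.
From Stdlib Require Import List Classical ClassicalEpsilon.
Import ListNotations.

Definition HI1 {Lam A : Type} (s t : A -> Lam) (R : list A -> list A -> Prop) :=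
  forall p q, R p q -> exists a v b w,
      p = [a; v] /\ q = [b; w] /\ t a = s v /\ t b = s w /\ s a = s b /\ t v = t w.
Definition HI2 {A : Type} (R : list A -> list A -> Prop) :=
  forall a v p q, inR R [a; v] p -> inR R [a; v] q -> p = q.
Definition HII {Lam A : Type} (s : A -> Lam) (R : list A -> list A -> Prop) :=
  forall a b, a <> b -> s a = s b -> exists! vw : A * A, inR R [a; (fst vw)] [b; (snd vw)].
Definition HII' {Lam A : Type} (t : A -> Lam) (R : list A -> list A -> Prop) :=
  forall a b, a <> b -> t a = t b -> exists! vw : A * A, inR R [(fst vw); a] [(snd vw); b].
Definition HIII {Lam A : Type} (s t : A -> Lam) (R : list A -> list A -> Prop) :=
  forall a, exists! z, isZ s t R a z.
Definition HIII' {Lam A : Type} (s t : A -> Lam) (R : list A -> list A -> Prop) :=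
  forall a, exists! z, isZ' s t R a z.

Definition op {Lam A : Type} (s t : A -> Lam) R (a b : A) : A :=
  epsilon (inhabits a) (fun v => s v = t a /\ starP s t R a b v).
Definition inv {Lam A : Type} (s t : A -> Lam) R (a y : A) : A :=
  epsilon (inhabits a) (fun c => s c = s a /\ op s t R a c = y).
Definition sg {Lam A : Type} (s t : A -> Lam) R (a y : A) : A * A :=
  (inv s t R a y, op s t R (inv s t R a y) a).


Lemma inR_sym {A} (R : list A -> list A -> Prop) p q : inR R p q -> inR R q p.
Proof. unfold inR; tauto. Qed.

Lemma inR_info {Lam A} {s t : A -> Lam} {R : list A -> list A -> Prop} (H1 : HI1 s t R) {a v b w : A} :
  inR R [a; v] [b; w] -> t a = s v /\ t b = s w /\ s a = s b /\ t v = t w.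
Proof.
  intros [H|H]; destruct (H1 _ _ H) as (a'&v'&b'&w'&E1&E2&h1&h2&h3&h4);
  inversion E1; inversion E2; subst; repeat split; auto.
Qed.

Lemma S1 {Lam A} {s t : A -> Lam} {R : list A -> list A -> Prop} (H1 : HI1 s t R) (H3 : HII s R) (H4 : HIII s t R) a b :
  s b = s a -> exists v, s v = t a /\ starP s t R a b v.
Proof.
  intros Hs. destruct (classic (a = b)) as [<-|Hab].
  - destruct (H4 a) as [z [Hz _]]. exists z. split. apply Hz. right. auto.
  - destruct (H3 a b Hab (eq_sym Hs)) as [[v w] [Hvw _]]. simpl in Hvw.
    destruct (inR_info H1 Hvw) as [h1 _]. exists v. split; [auto|].
    left. split; auto. split; auto. split; auto. exists w; auto.
Qed.

Lemma S2 {Lam A} {s t : A -> Lam} {R : list A -> list A -> Prop} (H3 : HII s R) (H4 : HIII s t R) {a b v v' : A} :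
  starP s t R a b v -> starP s t R a b v' -> v = v'.
Proof.
  intros [[Hab [_ [Hs [w Hw]]]]|[Hab Hz]] [[Hab' [_ [_ [w' Hw']]]]|[Hab' Hz']];
    try contradiction.
  - destruct (H3 a b Hab Hs) as [x [_ Hu]].
    pose proof (Hu (v, w) Hw) as E1. pose proof (Hu (v', w') Hw') as E2.
    rewrite E2 in E1. inversion E1. auto.
  - destruct (H4 a) as [z [_ Hu]]. rewrite <- (Hu _ Hz), <- (Hu _ Hz'). auto.
Qed.

Lemma S3 {Lam A} {s t : A -> Lam} {R : list A -> list A -> Prop} (H2 : HI2 R) {a b c v : A} :
  starP s t R a b v -> starP s t R a c v -> b = c.
Proof.
  intros [[Hab [_ [Hs [w Hw]]]]|[Hab Hz]] [[Hac [_ [_ [w' Hw']]]]|[Hac Hz']].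
  - pose proof (H2 _ _ _ _ Hw Hw') as E. inversion E. auto.
  - subst c. destruct Hz' as [_ [_ Hz3]]. destruct (Hz3 _ _ Hw). auto.
  - subst b. destruct Hz as [_ [_ Hz3]]. destruct (Hz3 _ _ Hw'). auto.
  - congruence.
Qed.

Lemma S4 {Lam A} {s t : A -> Lam} {R : list A -> list A -> Prop} (H4 : HIII s t R) a v :
  s v = t a -> exists b, s b = s a /\ starP s t R a b v.
Proof.
  intros Hs. destruct (H4 a) as [z [Hz _]].
  destruct (classic (v = z)) as [->|Hvz].
  - exists a. split; auto. right. auto.
  - destruct Hz as [Hzs [Hz2 Hz3]]. destruct (Hz2 v Hs Hvz) as (b&w&Hb&Hba&Hw).
    exists b. split; auto. left. split; auto. split; auto. split; auto. exists w; auto.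
Qed.


Lemma op_spec {Lam A} {s t : A -> Lam} {R : list A -> list A -> Prop} (H1 : HI1 s t R) (H3 : HII s R) (H4 : HIII s t R) a b :
  s b = s a -> s (op s t R a b) = t a /\ starP s t R a b (op s t R a b).
Proof. intros Hs. unfold op. apply epsilon_spec. apply (S1 H1 H3 H4 _ _ Hs). Qed.

Lemma op_inj {Lam A} {s t : A -> Lam} {R : list A -> list A -> Prop} (H1 : HI1 s t R) (H2 : HI2 R) (H3 : HII s R) (H4 : HIII s t R) a b c :
  s b = s a -> s c = s a -> op s t R a b = op s t R a c -> b = c.
Proof.
  intros Hb Hc E. destruct (op_spec H1 H3 H4 _ _ Hb) as [_ P1].
  destruct (op_spec H1 H3 H4 _ _ Hc) as [_ P2]. rewrite E in P1.
  exact (S3 H2 P1 P2).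
Qed.

Lemma op_surj {Lam A} {s t : A -> Lam} {R : list A -> list A -> Prop} (H1 : HI1 s t R) (H3 : HII s R) (H4 : HIII s t R) a v :
  s v = t a -> exists b, s b = s a /\ op s t R a b = v.
Proof.
  intros Hs. destruct (S4 H4 _ _ Hs) as [b [Hb P]]. exists b. split; auto.
  destruct (op_spec H1 H3 H4 _ _ Hb) as [_ P']. exact (S2 H3 H4 P' P).
Qed.

Lemma inv_spec {Lam A} {s t : A -> Lam} {R : list A -> list A -> Prop} (H1 : HI1 s t R) (H3 : HII s R) (H4 : HIII s t R) a y :
  t a = s y -> s (inv s t R a y) = s a /\ op s t R a (inv s t R a y) = y.
Proof. intros Hs. unfold inv. apply epsilon_spec. apply (op_surj H1 H3 H4). auto. Qed.

Lemma inv_op {Lam A} {s t : A -> Lam} {R : list A -> list A -> Prop} (H1 : HI1 s t R) (H2 : HI2 R) (H3 : HII s R) (H4 : HIII s t R) a b :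
  s b = s a -> inv s t R a (op s t R a b) = b.
Proof.
  intros Hb. destruct (op_spec H1 H3 H4 _ _ Hb) as [Hs _].
  destruct (inv_spec H1 H3 H4 a (op s t R a b) (eq_sym Hs)) as [Hi E].
  exact (op_inj H1 H2 H3 H4 _ _ _ Hi Hb E).
Qed.

Lemma sg_enc {Lam A} {s t : A -> Lam} {R : list A -> list A -> Prop} (H1 : HI1 s t R) (H2 : HI2 R) (H3 : HII s R) (H4 : HIII s t R) u v :
  s v = s u -> sg s t R u (op s t R u v) = (v, op s t R v u).
Proof. intros Hs. unfold sg. rewrite (inv_op H1 H2 H3 H4 _ _ Hs). reflexivity. Qed.

Lemma same_first {Lam A} {s t : A -> Lam} {R : list A -> list A -> Prop} (H1 : HI1 s t R) (H2 : HI2 R) (H4 : HIII s t R) x y d :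
  inR R [x; y] [x; d] -> d = y.
Proof.
  intros H. destruct (H4 x) as [z [[Hzs [Hz2 Hz3]] _]].
  destruct (classic (y = z)) as [->|Hyz].
  - destruct (Hz3 _ _ H). auto.
  - destruct (inR_info H1 H) as [h _].
    destruct (Hz2 y (eq_sym h) Hyz) as (b&w&Hb&Hbx&Hw).
    pose proof (H2 _ _ _ _ H Hw) as E. inversion E. congruence.
Qed.

Lemma sg_spec {Lam A} {s t : A -> Lam} {R : list A -> list A -> Prop} (H1 : HI1 s t R) (H2 : HI2 R) (H3 : HII s R) (H4 : HIII s t R) x y :
  t x = s y ->
  (fst (sg s t R x y) = x /\ snd (sg s t R x y) = y /\ isZ s t R x y) \/
  (fst (sg s t R x y) <> x /\ inR R [x; y] [fst (sg s t R x y); snd (sg s t R x y)]).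
Proof.
  intros Hxy. unfold sg; simpl.
  destruct (inv_spec H1 H3 H4 _ _ Hxy) as [Hc1 Hc2].
  set (c := inv s t R x y) in *.
  destruct (op_spec H1 H3 H4 x c Hc1) as [_ P1]. rewrite Hc2 in P1.
  destruct (classic (c = x)) as [E|Hcx].
  - left. rewrite E in *. split; auto. split; auto.
    destruct P1 as [[h _]|[_ h]]; [congruence|auto].
  - right. split; auto.
    destruct P1 as [[_ [_ [_ [w Hw]]]]|[h _]]; [|congruence].
    destruct (op_spec H1 H3 H4 c x (eq_sym Hc1)) as [_ P2].
    destruct P2 as [[_ [_ [Hs [w' Hw']]]]|[h _]]; [|congruence].
    destruct (H3 c x Hcx Hs) as [q [_ Hu]].
    pose proof (Hu (w, y) (inR_sym _ _ _ Hw)) as E1. pose proof (Hu (_, w') Hw') as E2.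
    rewrite E2 in E1. injection E1 as e1 e2. rewrite e1. exact Hw.
Qed.

Lemma sg_rel {Lam A} {s t : A -> Lam} {R : list A -> list A -> Prop} (H1 : HI1 s t R) (H2 : HI2 R) (H3 : HII s R) (H4 : HIII s t R) x y c d :
  inR R [x; y] [c; d] -> c <> x -> sg s t R x y = (c, d).
Proof.
  intros H Hcx. destruct (inR_info H1 H) as (h1&h2&h3&h4).
  assert (P : starP s t R x c y).
  { left. split; auto. split; auto. split; auto. exists d; auto. }
  destruct (op_spec H1 H3 H4 x c (eq_sym h3)) as [_ P'].
  pose proof (S2 H3 H4 P' P) as Exy. rewrite <- Exy.
  rewrite (sg_enc H1 H2 H3 H4 _ _ (eq_sym h3)). f_equal.
  assert (Q : starP s t R c x d).
  { left. split; auto. split; auto. split; auto. exists y; apply inR_sym; auto. }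
  destruct (op_spec H1 H3 H4 c x h3) as [_ Q'].
  exact (S2 H3 H4 Q' Q).
Qed.

Lemma sg_fix {Lam A} {s t : A -> Lam} {R : list A -> list A -> Prop} (H1 : HI1 s t R) (H2 : HI2 R) (H3 : HII s R) (H4 : HIII s t R) x y :
  isZ s t R x y -> sg s t R x y = (x, y).
Proof.
  intros Hz. assert (P : starP s t R x x y) by (right; auto).
  destruct (op_spec H1 H3 H4 x x eq_refl) as [_ P'].
  pose proof (S2 H3 H4 P' P) as E. rewrite <- E.
  apply (sg_enc H1 H2 H3 H4). reflexivity.
Qed.

Lemma snd_y {Lam A} {s t : A -> Lam} {R : list A -> list A -> Prop} (H1 : HI1 s t R) (H2 : HI2 R) (H3 : HII s R) (H4 : HIII s t R) (H4' : HIII' s t R) x y :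
  t x = s y -> snd (sg s t R x y) = y -> isZ' s t R y x.
Proof.
  intros Hxy Hsnd. destruct (H4' y) as [u [Hu _]].
  destruct (classic (x = u)) as [->|Hxu]; auto.
  destruct Hu as [Hus [Hu2 Hu3]].
  destruct (Hu2 x Hxy Hxu) as (b&w&Hb&Hby&Hw).
  destruct (sg_spec H1 H2 H3 H4 x y Hxy) as [[_ [_ [_ [_ Hz3]]]]|[_ Hr]].
  - destruct (Hz3 _ _ Hw). congruence.
  - pose proof (H2 _ _ _ _ Hr Hw) as E. inversion E. congruence.
Qed.

Definition HV {Lam A : Type} (s : A -> Lam) (R : list A -> list A -> Prop) :=
  forall a b c, a <> b -> b <> c -> a <> c -> s a = s b -> s a = s c ->
      forall v1 v2 v3 v4 u1 u2,
      starR s R a b v1 -> starR s R a c v2 -> starR s R b a v3 -> starR s R b c v4 ->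
      starR s R v1 v2 u1 -> starR s R v3 v4 u2 -> u1 = u2.

Lemma op_neq {Lam A} {s t : A -> Lam} {R : list A -> list A -> Prop} (H1 : HI1 s t R) (H2 : HI2 R) (H3 : HII s R) (H4 : HIII s t R) (H4' : HIII' s t R) a b :
  a <> b -> s b = s a -> op s t R a b <> op s t R b a.
Proof.
  intros Hab Hs E.
  destruct (op_spec H1 H3 H4 _ _ Hs) as [Ha _].
  destruct (op_spec H1 H3 H4 _ _ (eq_sym Hs)) as [Hb _].
  pose proof (sg_enc H1 H2 H3 H4 _ _ Hs) as Ea.
  pose proof (sg_enc H1 H2 H3 H4 _ _ (eq_sym Hs)) as Eb.
  assert (Za : isZ' s t R (op s t R a b) a).
  { apply (snd_y H1 H2 H3 H4 H4'). auto. rewrite Ea. simpl. auto. }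
  assert (Zb : isZ' s t R (op s t R b a) b).
  { apply (snd_y H1 H2 H3 H4 H4'). auto. rewrite Eb. simpl. auto. }
  rewrite <- E in Zb. destruct (H4' (op s t R a b)) as [u [_ Hu]].
  apply Hab. rewrite <- (Hu _ Za), <- (Hu _ Zb). auto.
Qed.

Lemma t_op {Lam A} {s t : A -> Lam} {R : list A -> list A -> Prop} (H1 : HI1 s t R) (H2 : HI2 R) (H3 : HII s R) (H4 : HIII s t R) a b :
  s b = s a -> t (op s t R a b) = t (op s t R b a).
Proof.
  intros Hs. destruct (classic (a = b)) as [->|Hab]; auto.
  destruct (op_spec H1 H3 H4 _ _ Hs) as [Ha _].
  destruct (sg_spec H1 H2 H3 H4 a (op s t R a b) (eq_sym Ha)) as [[h _]|[_ h]];
    rewrite (sg_enc H1 H2 H3 H4 _ _ Hs) in h; simpl in h.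
  - congruence.
  - destruct (inR_info H1 h) as (_&_&_&h4). auto.
Qed.

Lemma zz {Lam A} {s t : A -> Lam} {R : list A -> list A -> Prop} (H1 : HI1 s t R) (H2 : HI2 R) (H3 : HII s R) (H4 : HIII s t R) (H4' : HIII' s t R) v w :
  op s t R v v = op s t R w w -> v = w.
Proof.
  intros E.
  assert (K : forall x, isZ' s t R (op s t R x x) x).
  { intros x. destruct (op_spec H1 H3 H4 x x eq_refl) as [Hs P].
    destruct P as [[h _]|[_ Z]]; [congruence|].
    apply (snd_y H1 H2 H3 H4 H4'). auto. rewrite (sg_fix H1 H2 H3 H4 _ _ Z). auto. }
  pose proof (K v) as Kv. pose proof (K w) as Kw. rewrite <- E in Kw.
  destruct (H4' (op s t R v v)) as [u [_ Hu]].
  rewrite <- (Hu _ Kv), <- (Hu _ Kw). auto.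
Qed.

Lemma starR_op {Lam A} {s t : A -> Lam} {R : list A -> list A -> Prop} (H1 : HI1 s t R) (H3 : HII s R) (H4 : HIII s t R) a b :
  a <> b -> s b = s a -> starR s R a b (op s t R a b).
Proof.
  intros Hab Hs. destruct (op_spec H1 H3 H4 _ _ Hs) as [_ [[_ P]|[h _]]]; [auto|congruence].
Qed.

Lemma cyc_gen {Lam A} {s t : A -> Lam} {R : list A -> list A -> Prop} (H1 : HI1 s t R) (H2 : HI2 R) (H3 : HII s R) (H4 : HIII s t R) (Hv : HV s R) a b c :
  a <> b -> b <> c -> a <> c -> s b = s a -> s c = s a ->
  op s t R (op s t R a b) (op s t R a c) = op s t R (op s t R b a) (op s t R b c).
Proof.
  intros Hab Hbc Hac Hb Hc.
  destruct (op_spec H1 H3 H4 _ _ Hb) as [Sab _].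
  destruct (op_spec H1 H3 H4 _ _ Hc) as [Sac _].
  destruct (op_spec H1 H3 H4 _ _ (eq_sym Hb)) as [Sba _].
  assert (Hbc' : s c = s b) by congruence.
  destruct (op_spec H1 H3 H4 _ _ Hbc') as [Sbc _].
  assert (N1 : op s t R a b <> op s t R a c).
  { intro E. apply Hbc. exact (op_inj H1 H2 H3 H4 _ _ _ Hb Hc E). }
  assert (N2 : op s t R b a <> op s t R b c).
  { intro E. apply Hac. exact (op_inj H1 H2 H3 H4 _ _ _ (eq_sym Hb) Hbc' E). }
  apply (Hv a b c Hab Hbc Hac (eq_sym Hb) (eq_sym Hc)
    (op s t R a b) (op s t R a c) (op s t R b a) (op s t R b c));
  apply (starR_op H1 H3 H4); auto; congruence.
Qed.

Lemma cyc_deg {Lam A} {s t : A -> Lam} {R : list A -> list A -> Prop} (H1 : HI1 s t R) (H2 : HI2 R) (H3 : HII s R) (H4 : HIII s t R) (H4' : HIII' s t R) (Hv : HV s R) a b :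
  a <> b -> s b = s a ->
  op s t R (op s t R a b) (op s t R a a) = op s t R (op s t R b a) (op s t R b a).
Proof.
  intros Hab Hb.
  set (v := op s t R a b). set (w := op s t R b a).
  destruct (op_spec H1 H3 H4 _ _ Hb) as [Sv _].
  destruct (op_spec H1 H3 H4 _ _ (eq_sym Hb)) as [Sw _].
  destruct (op_spec H1 H3 H4 w w eq_refl) as [Sww _].
  pose proof (t_op H1 H2 H3 H4 _ _ Hb) as Tvw. fold v w in Tvw, Sv, Sw.
  assert (HY : s (op s t R w w) = t v) by congruence.
  destruct (op_surj H1 H3 H4 _ _ HY) as [x [Hx Ex]].
  assert (Hx' : s x = t a) by congruence.
  destruct (op_surj H1 H3 H4 _ _ Hx') as [c [Hc Ec]].
  destruct (classic (c = a)) as [->|Hca]; [congruence|].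
  destruct (classic (c = b)) as [->|Hcb].
  - exfalso. fold v in Ec. subst x.
    apply (op_neq H1 H2 H3 H4 H4' a b Hab Hb). fold v w.
    exact (zz H1 H2 H3 H4 H4' _ _ Ex).
  - exfalso. pose proof (cyc_gen H1 H2 H3 H4 Hv a b c Hab (fun e => Hcb (eq_sym e)) (fun e => Hca (eq_sym e)) Hb Hc) as C.
    fold v w in C. rewrite Ec, Ex in C.
    assert (Hcb' : s c = s b) by congruence.
    destruct (op_spec H1 H3 H4 _ _ Hcb') as [Sbc _].
    assert (E2 : op s t R b c = w).
    { apply (op_inj H1 H2 H3 H4 w); congruence. }
    unfold w in E2. apply Hca. exact (op_inj H1 H2 H3 H4 b c a Hcb' (eq_sym Hb) E2).
Qed.

Lemma cyc {Lam A} {s t : A -> Lam} {R : list A -> list A -> Prop} (H1 : HI1 s t R) (H2 : HI2 R) (H3 : HII s R) (H4 : HIII s t R) (H4' : HIII' s t R) (Hv : HV s R) a b c :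
  s b = s a -> s c = s a ->
  op s t R (op s t R a b) (op s t R a c) = op s t R (op s t R b a) (op s t R b c).
Proof.
  intros Hb Hc.
  destruct (classic (a = b)) as [->|Hab]; auto.
  destruct (classic (a = c)) as [<-|Hac].
  - apply (cyc_deg H1 H2 H3 H4 H4' Hv); auto.
  - destruct (classic (b = c)) as [<-|Hbc].
    + symmetry. apply (cyc_deg H1 H2 H3 H4 H4' Hv); auto.
    + apply (cyc_gen H1 H2 H3 H4 Hv); auto.
Qed.

Lemma s12_T {Lam A} {s t : A -> Lam} {R : list A -> list A -> Prop} (H1 : HI1 s t R) (H2 : HI2 R) (H3 : HII s R) (H4 : HIII s t R) (H4' : HIII' s t R) (Hv : HV s R) a b c :
  s b = s a -> s c = s a ->
  s12 (sg s t R) (a, op s t R a b, op s t R (op s t R a b) (op s t R a c)) =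
  (b, op s t R b a, op s t R (op s t R b a) (op s t R b c)).
Proof.
  intros Hb Hc. unfold s12. cbv beta iota.
  rewrite (sg_enc H1 H2 H3 H4 _ _ Hb). rewrite (cyc H1 H2 H3 H4 H4' Hv a b c Hb Hc).
  reflexivity.
Qed.

Lemma s23_T {Lam A} {s t : A -> Lam} {R : list A -> list A -> Prop} (H1 : HI1 s t R) (H2 : HI2 R) (H3 : HII s R) (H4 : HIII s t R) a b c :
  s b = s a -> s c = s a ->
  s23 (sg s t R) (a, op s t R a b, op s t R (op s t R a b) (op s t R a c)) =
  (a, op s t R a c, op s t R (op s t R a c) (op s t R a b)).
Proof.
  intros Hb Hc. unfold s23. cbv beta iota.
  destruct (op_spec H1 H3 H4 _ _ Hb) as [Sb _].
  destruct (op_spec H1 H3 H4 _ _ Hc) as [Sc _].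
  rewrite (sg_enc H1 H2 H3 H4 (op s t R a b) (op s t R a c)) by congruence.
  reflexivity.
Qed.

Theorem theorem6p3 (Lam A : Type) (s t : A -> Lam) (R : list A -> list A -> Prop)
  (* (i) *)
  (Hi1 : forall p q, R p q -> exists a v b w,
      p = [a; v] /\ q = [b; w] /\ t a = s v /\ t b = s w /\ s a = s b /\ t v = t w)
  (Hi2 : forall a v p q, inR R [a; v] p -> inR R [a; v] q -> p = q)
  (* (ii) *)
  (Hii : forall a b, a <> b -> s a = s b ->
      exists! vw : A * A, inR R [a; (fst vw)] [b; (snd vw)])
  (* (ii') *)
  (Hii' : forall a b, a <> b -> t a = t b ->
      exists! vw : A * A, inR R [(fst vw); a] [(snd vw); b])
  (* (iii) *)
  (Hiii : forall a, exists! z, isZ s t R a z)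
  (* (iii') *)
  (Hiii' : forall a, exists! z, isZ' s t R a z)
  (* (v) *)
  (Hv : forall a b c, a <> b -> b <> c -> a <> c -> s a = s b -> s a = s c ->
      forall v1 v2 v3 v4 u1 u2,
      starR s R a b v1 -> starR s R a c v2 -> starR s R b a v3 -> starR s R b c v4 ->
      starR s R v1 v2 u1 -> starR s R v3 v4 u2 -> u1 = u2) :
  (forall a,
     (forall b, s b = s a -> exists! v, s v = t a /\ starP s t R a b v) /\
     (forall v, s v = t a -> exists! b, s b = s a /\ starP s t R a b v)) /\
  exists sigma : A -> A -> A * A,
    (forall a b, t a = s b ->
       rhR s t R a b (fst (sigma a b)) /\ lhR s t R a b (snd (sigma a b))) /\
    is_QYB s t sigma /\ involutive_QYB s t sigma /\ nondegenerate_QYB s t sigma /\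
    (forall p q, is_path s t p -> is_path s t q ->
       (congr s t R p q <-> congr s t (sigma_rel s t sigma) p q)).
Proof.
  pose proof (Hi1 : HI1 s t R) as H1. pose proof (Hi2 : HI2 R) as H2.
  pose proof (Hii : HII s R) as H3. pose proof (Hiii : HIII s t R) as H4.
  pose proof (Hiii' : HIII' s t R) as H4'. pose proof (Hv : HV s R) as HV5.
  split.
  { intro a. split.
    - intros b Hb. exists (op s t R a b). split.
      + exact (op_spec H1 H3 H4 _ _ Hb).
      + intros v [_ P]. destruct (op_spec H1 H3 H4 _ _ Hb) as [_ P'].
        exact (S2 H3 H4 P' P).
    - intros v Hs. destruct (S4 H4 _ _ Hs) as [b [Hb P]]. exists b. split; auto.
      intros b' [_ P']. exact (S3 H2 P P'). }
  exists (sg s t R). split; [|split; [|split; [|split]]].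
  - intros a b Hab. destruct (inv_spec H1 H3 H4 _ _ Hab) as [Hc1 Hc2].
    assert (RH : rhR s t R a b (inv s t R a b)).
    { split; auto. destruct (op_spec H1 H3 H4 _ _ Hc1) as [_ P]. rewrite Hc2 in P. exact P. }
    split; [exact RH|]. exists (inv s t R a b). split; [exact RH|].
    destruct (op_spec H1 H3 H4 (inv s t R a b) a (eq_sym Hc1)) as [_ P]. exact P.
  - split.
    + intros a b Hab. destruct (inv_spec H1 H3 H4 _ _ Hab) as [Hc1 Hc2].
      unfold sg; cbn [fst snd]. split; auto.
      destruct (op_spec H1 H3 H4 (inv s t R a b) a (eq_sym Hc1)) as [S _].
      split; auto. rewrite (t_op H1 H2 H3 H4 _ _ (eq_sym Hc1)). rewrite Hc2. auto.
    + intros x y z Hxy Hyz.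
      destruct (op_surj H1 H3 H4 x y (eq_sym Hxy)) as [b [Hb Eb]]. subst y.
      destruct (op_surj H1 H3 H4 _ z (eq_sym Hyz)) as [x' [Hx' Ex']]. subst z.
      destruct (op_spec H1 H3 H4 _ _ Hb) as [Sb _].
      destruct (op_surj H1 H3 H4 x x' ltac:(congruence)) as [c [Hc Ec]]. subst x'.
      rewrite (s12_T H1 H2 H3 H4 H4' HV5 x b c Hb Hc).
      rewrite (s23_T H1 H2 H3 H4 b x c) by congruence.
      rewrite (s12_T H1 H2 H3 H4 H4' HV5 b c x) by congruence.
      rewrite (s23_T H1 H2 H3 H4 x b c Hb Hc).
      rewrite (s12_T H1 H2 H3 H4 H4' HV5 x c b Hc Hb).
      rewrite (s23_T H1 H2 H3 H4 c x b) by congruence.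
      reflexivity.
  - intros a b Hab.
    destruct (op_surj H1 H3 H4 a b (eq_sym Hab)) as [v [Hv' Ev]]. subst b.
    rewrite (sg_enc H1 H2 H3 H4 _ _ Hv'). cbn [fst snd].
    rewrite (sg_enc H1 H2 H3 H4 _ _ (eq_sym Hv')). reflexivity.
  - split.
    + intros x z Hz. exists (op s t R x z). split.
      * split. exact (proj1 (op_spec H1 H3 H4 _ _ Hz)).
        rewrite (sg_enc H1 H2 H3 H4 _ _ Hz). reflexivity.
      * intros y [Hy Hf]. change (inv s t R x y = z) in Hf.
        destruct (inv_spec H1 H3 H4 x y (eq_sym Hy)) as [_ E]. rewrite Hf in E. exact E.
    + intros y z Hz. destruct (classic (z = y)) as [->|Hzy].
      * destruct (H4' y) as [u [Hu Huu]]. exists u.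
        destruct Hu as [Hus [Hu2 Hu3]] eqn:HuE. split.
        -- split; auto.
           destruct (sg_spec H1 H2 H3 H4 u y Hus) as [[_ [h _]]|[_ h]]; auto.
           destruct (Hu3 _ _ h). auto.
        -- intros x [Hx Hsnd]. apply Huu. exact (snd_y H1 H2 H3 H4 H4' _ _ Hx Hsnd).
      * destruct (Hii' y z (fun e => Hzy (eq_sym e)) (eq_sym Hz)) as [[v w] [Hvw Hu]].
        cbn [fst snd] in Hvw.
        destruct (inR_info H1 Hvw) as (h1&_&_&_).
        assert (Hwv : w <> v).
        { intro e. subst w. apply Hzy.
          exact (same_first H1 H2 H4 v y z Hvw). }
        exists v. split.
        -- split; auto. rewrite (sg_rel H1 H2 H3 H4 _ _ _ _ Hvw Hwv). reflexivity.
        -- intros x [Hx Hsnd].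
           destruct (sg_spec H1 H2 H3 H4 x y Hx) as [[_ [h _]]|[_ h]].
           ++ exfalso. apply Hzy. rewrite <- Hsnd, h. reflexivity.
           ++ rewrite Hsnd in h. pose proof (Hu (x, fst (sg s t R x y)) h) as E.
              inversion E. auto.
  - intros p q _ _. split; intro H.
    + induction H.
      * destruct (Hi1 _ _ H) as (a&b&c&d&E1&E2&_). subst u v.
        destruct (classic (c = a)) as [->|Hca].
        -- rewrite (same_first H1 H2 H4 a b d (or_introl H)). apply congr_refl.
        -- apply congr_step; auto.
           exists a, b. destruct (inR_info H1 (or_introl H)) as (h1&_).
           split; auto. split; auto.
           rewrite (sg_rel H1 H2 H3 H4 _ _ _ _ (or_introl H) Hca). reflexivity.
      * apply congr_refl.
      * apply congr_sym; auto.
      * eapply congr_trans; eauto.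
    + induction H.
      * destruct H as (a&b&Hab&E1&E2). subst u v.
        destruct (sg_spec H1 H2 H3 H4 a b Hab) as [[e1 [e2 _]]|[_ [h|h]]].
        -- rewrite e1, e2. apply congr_refl.
        -- apply congr_step; auto.
        -- apply congr_sym. apply congr_step; auto.
      * apply congr_refl.
      * apply congr_sym; auto.
      * eapply congr_trans; eauto.
Qed.
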